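(* Let $(X,q)$ be a complete partial quasi-metric space and let $f:X\to X$ be a mapping such that there is $s\in\mathbb{R}$ with $0\leq s<1$ satisfying $q(f(x),f(y))\leq s\,q(x,y)$ for all $x,y\in X$ (so that $f$ has a unique fixed point $x^*$). If there exists $y\in X$ such that $d_q(f(y),y)=0$, then $d_q(x^*,y)=0$.
   Context: A partial quasi-metric on a nonempty set $X$ is a function $q:X\times X\to[0,\infty)$ such that for all $x,y,z\in X$: (i) $q(x,x)\le q(x,y)$; (ii) $q(x,x)\le q(y,x)$; (iii) $q(x,y)\le q(x,z)+q(z,y)-q(z,z)$; (iv) $q(x,x)=q(x,y)$ and $q(y,y)=q(y,x)$ iff $x=y$. The associated quasi-metric is $d_q(x,y)=q(x,y)-q(x,x)$. A quasi-metric $d$ on $X$ is bicomplete if the metric $d^s(x,y)=\max(d(x,y),d(y,x))$ is complete. $(X,q)$ is complete if $(X,d_q)$ is bicomplete. (It is known that under the contraction hypothesis $f$ has a unique fixed point $x^*$, with $q(x^*,x^* )=0$.) *)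

(* Defs.v *)
From Stdlib Require Import Reals.
Open Scope R_scope.

Definition is_partial_quasi_metric {X : Type} (q : X -> X -> R) : Prop :=
  (forall x y, 0 <= q x y) /\
  (forall x y, q x x <= q x y) /\
  (forall x y, q x x <= q y x) /\
  (forall x y z, q x y <= q x z + q z y - q z z) /\
  (forall x y, (q x x = q x y /\ q y y = q y x) <-> x = y).

Definition dq {X : Type} (q : X -> X -> R) (x y : X) : R := q x y - q x x.

Definition dsym {X : Type} (d : X -> X -> R) (x y : X) : R := Rmax (d x y) (d y x).

Definition metric_complete {X : Type} (m : X -> X -> R) : Prop :=
  forall u : nat -> X,
    (forall eps, eps > 0 -> exists N, forall n k, (n >= N)%nat -> (k >= N)%nat -> m (u n) (u k) < eps) ->
    exists l, forall eps, eps > 0 -> exists N, forall n, (n >= N)%nat -> m (u n) l < eps.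

Definition bicomplete {X : Type} (d : X -> X -> R) : Prop := metric_complete (dsym d).

Definition pqm_complete {X : Type} (q : X -> X -> R) : Prop := bicomplete (dq q).

(* Main.v *)
Require Import Defs.
From Stdlib Require Import Reals Lra.
Open Scope R_scope.

Theorem proposition6 (X : Type) (q : X -> X -> R) (f : X -> X) (s : R) :
  is_partial_quasi_metric q ->
  pqm_complete q ->
  0 <= s -> s < 1 ->
  (forall x y, q (f x) (f y) <= s * q x y) ->
  forall xstar : X, f xstar = xstar ->
  forall y : X, dq q (f y) y = 0 -> dq q xstar y = 0.
Proof.
  intros [H0 [_ [_ [Ht _]]]] _ Hs0 Hs1 Hc xs Hfx y Hy.
  unfold dq in *.
  assert (A := Hc xs xs). rewrite Hfx in A.
  assert (B := Hc xs y). rewrite Hfx in B.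
  assert (C := Ht xs y (f y)).
  assert (D := H0 xs xs). assert (E := H0 xs y).
  assert (q xs xs = 0) by nra.
  assert (q xs y = 0) by nra.
  lra.
Qed.
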